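(* Let $q:\mathsf D\to\mathbb R$ have sensitivity $\Delta q\in(0,\infty)$, and let $\Lambda$ be a random variable with support in $(0,\infty)$, $\mathbb E[\Lambda]<\infty$, MGF $M_\Lambda$, and $M_\Lambda(\Delta q)<\infty$. Let $\epsilon_R=\ln[\mathbb E(\Lambda)/M'_\Lambda(-\Delta q)]$ be the privacy level of the Randomized DP Laplace mechanism with reciprocal scale $\Lambda$. If $\epsilon_R\ge \ln \mathbb E\big[e^{\Delta q\,\Lambda}\big]=\ln M_\Lambda(\Delta q)$, then for every $\gamma>0$ the usefulness of this mechanism is at most that of the baseline Laplace mechanism with the same privacy level, i.e. $$\mathbb P(|\mathcal M_q(d)-q(d)|\le\gamma)\le 1-e^{-\epsilon_R\gamma/\Delta q}.$$ Equivalently, a necessary condition for the Randomized DP Laplace mechanism to have strictly larger usefulness than the $\epsilon_R$-DP baseline Laplace mechanism for some $\gamma>0$ is $$e^{\epsilon_R}=\frac{\mathbb E(\Lambda)}{M'_\Lambda(-\Delta q)}<M_\Lambda(\Delta q).$$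
   Context: Databases form a set $\mathsf D$ with a symmetric adjacency relation; the sensitivity of $q$ is $\Delta q=\sup\{|q(d)-q(d')|:d,d'\text{ adjacent}\}$. The baseline $\epsilon$-DP Laplace mechanism outputs $q(d)+Z$ with $Z$ Laplace of mean $0$ and scale $\Delta q/\epsilon$, so its usefulness at level $\gamma$ is $\mathbb P(|Z|\le\gamma)=1-e^{-\epsilon\gamma/\Delta q}$. The Randomized DP Laplace mechanism with reciprocal-scale distribution $\Lambda$ (a random variable with values in $(0,\infty)$, playing the role of $1/b$ for the Laplace scale $b$) is defined by $\mathcal M_q(d)=q(d)+W$, where conditionally on $\Lambda=\lambda$ the noise $W$ is Laplace with mean $0$ and scale $1/\lambda$, i.e. has density $\frac{\lambda}{2}e^{-\lambda|w|}$; the pair $(\Lambda,W)$ is drawn independently of $d$. $M_\Lambda(t)=\mathbb E[e^{t\Lambda}]$ and $M'_\Lambda(t)=\mathbb E[\Lambda e^{t\Lambda}]$. *)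

(* Defs.v *)
From mathcomp Require Import all_boot all_order all_algebra.
From mathcomp Require Import all_classical all_reals all_analysis.
Set Implicit Arguments. Unset Strict Implicit. Unset Printing Implicit Defensive.
Import Order.TTheory GRing.Theory Num.Theory.
Import numFieldNormedType.Exports.
Local Open Scope classical_set_scope.
Local Open Scope ring_scope.
Local Open Scope ereal_scope.

Definition sensitivity (D : Type) (R : realType) (adj : D -> D -> Prop)
  (q : D -> R) : \bar R :=
  ereal_sup [set x : \bar R | exists d d', adj d d' /\ x = (`|q d - q d'|)%:E].

Definition laplace_density (R : realType) (lam w : R) : R :=
  (lam / 2 * expR (- lam * `|w|))%R.

(* Law of the noise W of the Randomized Laplace mechanism: the mixture over
   lam ~ PL of Laplace(0, 1/lam), evaluated at a set A. *)
Definition rand_laplace_noise_law (R : realType) (PL : probability R R)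
  (A : set R) : \bar R :=
  \int[PL]_lam (\int[@lebesgue_measure R]_(w in A) (laplace_density lam w)%:E).

Definition mean_L (R : realType) (PL : probability R R) : R :=
  fine (\int[PL]_lam lam%:E).
Definition mgf_L (R : realType) (PL : probability R R) (t : R) : R :=
  fine (\int[PL]_lam (expR (t * lam))%:E).
(* M'_Lambda(t) = E[Lambda exp(t Lambda)] *)
Definition mgf'_L (R : realType) (PL : probability R R) (t : R) : R :=
  fine (\int[PL]_lam (lam * expR (t * lam))%:E).

Definition eps_R (R : realType) (PL : probability R R) (dq : R) : R :=
  ln (mean_L PL / mgf'_L PL (- dq)).

(* Main.v *)
Require Import Defs.
From mathcomp Require Import all_boot all_order all_algebra.
From mathcomp Require Import all_classical all_reals all_analysis.
From mathcomp Require Import measurable_realfun ring lra.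
Import Order.TTheory GRing.Theory Num.Theory.
Import numFieldNormedType.Exports.
Local Open Scope classical_set_scope.
Local Open Scope ring_scope.

Lemma is_derive_cexp (R : realType) (c k w : R) :
  is_derive w 1 (fun w => c * expR (k * w)) (c * (expR (k * w) * k)).
Proof.
have h1 : is_derive w 1 (fun w : R => k * w) k.
  have := @is_deriveZ R R R (@id R) k w 1 1 (is_derive_id _ _).
  by rewrite /GRing.scale /= mulr1.
have h2 : is_derive w 1 (expR \o (fun w : R => k * w)) (expR (k * w) * k).
  exact: is_derive1_comp.
have := @is_deriveZ R R R _ c w 1 _ h2.
by [].
Qed.

Lemma cexp_cont (R : realType) (c k : R) : continuous (fun w : R => c * expR (k * w)).
Proof.
move=> z; apply: differentiable_continuous; apply/derivable1_diffP.
by have [] := is_derive_cexp _ c k z.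
Qed.

Lemma laplace_cont (R : realType) (lam : R) : continuous (laplace_density lam).
Proof.
move=> z.
have -> : laplace_density lam = (fun u => lam / 2 * expR (- lam * u)) \o (fun w : R => `|w|).
  by apply: funext => w.
apply: continuous_comp; first exact: norm_continuous.
exact: cexp_cont.
Qed.

Local Notation mu := (@lebesgue_measure _).

Lemma half_right (R : realType) (lam g : R) : 0 < g ->
  (\int[mu]_(x in `[0%R, g]) (laplace_density lam x)%:E =
   ((1 - expR (- lam * g)) / 2)%:E)%E.
Proof.
move=> g0.
rewrite (@continuous_FTC2 R (laplace_density lam)
   (fun w => (- 1/2) * expR (- lam * w)) 0 g g0) //.
- rewrite -EFinB mulr0 expR0; congr (_%:E). field.
- done.
- by apply/continuous_subspaceT => ?; exact: laplace_cont.
- split.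
  + by move=> z _; have [] := is_derive_cexp _ (-1/2) (- lam) z.
  + by apply: cvg_at_right_filter; exact: cexp_cont.
  + by apply: cvg_at_left_filter; exact: cexp_cont.
- move=> z; rewrite in_itv/= => /andP[z0 _].
  rewrite derive1E (@derive_val _ _ _ _ _ _ _ (is_derive_cexp R (-1/2) (-lam) z)).
  rewrite /laplace_density ger0_norm ?ltW//.
  by field.
Qed.

Lemma half_left (R : realType) (lam g : R) : 0 < g ->
  (\int[mu]_(x in `[(- g)%R, 0%R]) (laplace_density lam x)%:E =
   ((1 - expR (- lam * g)) / 2)%:E)%E.
Proof.
move=> g0.
have ng0 : - g < 0 by rewrite oppr_lt0.
rewrite (@continuous_FTC2 R (laplace_density lam)
   (fun w => (1/2) * expR (lam * w)) (- g) 0 ng0) //.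
- by rewrite -EFinB mulr0 expR0 mulNr mulrN; congr (_%:E); field.
- by apply/continuous_subspaceT => ?; exact: laplace_cont.
- split.
  + by move=> z _; have [] := is_derive_cexp _ (1/2) lam z.
  + by apply: cvg_at_right_filter; exact: cexp_cont.
  + by apply: cvg_at_left_filter; exact: cexp_cont.
- move=> z; rewrite in_itv/= => /andP[_ z0].
  rewrite derive1E (@derive_val _ _ _ _ _ _ _ (is_derive_cexp R (1/2) lam z)).
  rewrite /laplace_density ltr0_norm// mulrN mulNr opprK.
  by field.
Qed.

Lemma laplace_mfun (R : realType) (lam : R) (D : set R) :
  measurable_fun D (laplace_density lam).
Proof.
apply: measurable_funTS.
apply: continuous_measurable_fun; exact: laplace_cont.
Qed.

Lemma inner_eq (R : realType) (lam g : R) : 0 < g ->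
  (\int[mu]_(w in [set w : R | (`|w| <= g)%R]) (laplace_density lam w)%:E =
   (1 - expR (- lam * g))%:E)%E.
Proof.
move=> g0.
have -> : [set w : R | `|w| <= g] = `[(- g)%R, 0%R] `|` `]0%R, g].
  apply/seteqP; split => w /=.
  - rewrite !in_itv/= => wg; have [w0|w0] := leP w 0.
    + by left; rewrite andbT; move: wg; rewrite ler0_norm// lerNl.
    + by right; move: wg; rewrite gtr0_norm.
  - rewrite !in_itv/= => -[/andP[gw w0]|/andP[w0 wg]].
    + by rewrite ler0_norm// lerNl.
    + by rewrite gtr0_norm.
rewrite integral_setU //; last 2 first.
- by apply/measurable_EFinP; exact: laplace_mfun.
- apply/disj_setPS => w [] /=; rewrite !in_itv/= => /andP[_ w0] /andP[w0' _].
  by move: (lt_le_trans w0' w0); rewrite ltxx.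
rewrite integral_itv_obnd_cbnd; last by apply/measurable_EFinP; exact: laplace_mfun.
rewrite half_left// half_right// -EFinD; congr (_%:E); field.
by [].
Qed.

Lemma jensen_exp (R : realType) (P : probability R R) (S : set R) (c : R) :
  measurable S -> P S = 1%E ->
  P.-integrable S (EFin \o id) -> P.-integrable S (EFin \o (fun x => expR (c * x))) ->
  expR (c * Rintegral P S id) <= Rintegral P S (fun x => expR (c * x)).
Proof.
move=> mS PS iL iE.
set m := Rintegral P S id; set e := expR (c * m).
have pw : forall x, S x -> e * (1 - c * m) + (e * c) * x <= expR (c * x).
  move=> x _.
  have -> : expR (c * x) = e * expR (c * x - c * m).
    by rewrite /e -expRD addrC subrK.
  have := expR_ge1Dx (c * x - c * m).
  rewrite -(@ler_pM2l _ e) ?expR_gt0// => h; apply: le_trans h.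
  by rewrite le_eqVlt; apply/orP; left; apply/eqP; ring.
have iC : P.-integrable S (EFin \o (fun x : R => e * (1 - c * m))).
  exact: finite_measure_integrable_cst.
have iZ : P.-integrable S (EFin \o (fun x : R => (e * c) * x)).
  exact: (integrableZl mS (e * c) iL).
apply: le_trans (le_Rintegral mS _ iE pw); last first.
  by apply: (integrableD mS iC iZ).
rewrite (RintegralD mS iC iZ) Rintegral_cst//.
have -> : fine (P S) = 1 by rewrite PS.
rewrite mulr1.
rewrite (RintegralZl _ mS iL) -/m.
by rewrite le_eqVlt; apply/orP; left; apply/eqP; ring.
Qed.

Lemma expc_cont (R : realType) (c : R) : continuous (fun x : R => expR (c * x)).
Proof.
have -> : (fun x : R => expR (c * x)) = (fun x => 1 * expR (c * x)).
  by apply: funext => x; rewrite mul1r.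
exact: cexp_cont.
Qed.

Lemma cmeas (R : realType) (D : set R) (f : R -> R) : continuous f -> measurable_fun D f.
Proof. by move=> cf; apply: measurable_funTS; exact: continuous_measurable_fun. Qed.

Lemma restrictS (R : realType) (P : probability R R) (f : R -> R) :
  continuous f -> P `]0%R, +oo[%classic = 1%E ->
  (\int[P]_x (f x)%:E = \int[P]_(x in `]0%R, +oo[%classic) (f x)%:E)%E.
Proof.
move=> cf PS.
have mS : measurable (`]0%R, +oo[%classic : set R) by exact: measurable_itv.
have PnS : P (~` `]0%R, +oo[%classic) = 0%E.
  by rewrite probability_setC// PS subee.
rewrite -(setUv `]0%R, +oo[%classic) integral_setU //; last 3 first.
- exact: measurableC.
- by apply/measurable_EFinP; exact: cmeas.
- exact/disj_setPCl.
rewrite (@null_set_integral _ _ _ P (~` `]0%R, +oo[%classic)) ?adde0//.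
- exact: measurableC.
- by apply/measurable_EFinP; exact: cmeas.
Qed.

Theorem mainTheorem6 (R : realType) (D : Type) (adj : D -> D -> Prop)
  (q : D -> R) (dq : R) (PL : probability R R) :
  (forall d d', adj d d' -> adj d' d) ->
  sensitivity adj q = dq%:E -> 0 < dq ->
  PL `]0%R, +oo[%classic = 1%E ->
  PL.-integrable setT (fun lam => lam%:E) ->
  PL.-integrable setT (fun lam => (expR (dq * lam))%:E) ->
  ln (mgf_L PL dq) <= eps_R PL dq ->
  forall (gamma : R), 0 < gamma ->
  forall d : D,
  (rand_laplace_noise_law PL [set w : R | (`|(q d + w) - q d| <= gamma)%R]
    <= (1 - expR (- eps_R PL dq * gamma / dq))%:E)%E.
Proof.
move=> _ _ dq0 PS iLT iET hln gamma g0 d.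
pose S : set R := `]0%R, +oo[%classic.
have mS : measurable (S : set R) by exact: measurable_itv.
have iL : PL.-integrable S (EFin \o id).
  exact: (integrableS measurableT mS (@subsetT _ _) iLT).
have iE : PL.-integrable S (EFin \o (fun x => expR (dq * x))).
  exact: (integrableS measurableT mS (@subsetT _ _) iET).
have iG : PL.-integrable S (EFin \o (fun x => expR ((- gamma) * x))).
  apply: (@le_integrable _ _ _ PL S mS _ (EFin \o (cst 1))).
  - by apply/measurable_EFinP; apply: cmeas; exact: expc_cont.
  - move=> x; rewrite /S /= in_itv /= andbT => x0.
    rewrite !lee_fin ger0_norm ?expR_ge0// normr1 expR_le1.
    by rewrite mulNr oppr_le0 mulr_ge0 ?ltW.
  - exact: finite_measure_integrable_cst.
have meanE : mean_L PL = Rintegral PL S id.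
  rewrite /mean_L (@restrictS R PL id _ PS) //.
  by move=> x; exact: cvg_id.
have mgfE : mgf_L PL dq = Rintegral PL S (fun x => expR (dq * x)).
  by rewrite /mgf_L (@restrictS R PL (fun x => expR (dq * x)) (expc_cont _ dq) PS).
set m := Rintegral PL S id.
have J1 := @jensen_exp R PL S dq mS PS iL iE.
have J2 := @jensen_exp R PL S (- gamma) mS PS iL iG.
rewrite -/m -mgfE in J1.
rewrite -/m in J2.
have hm : dq * m <= eps_R PL dq.
  apply: le_trans hln.
  by rewrite -ler_expR lnK ?posrE ?(lt_le_trans (expR_gt0 _) J1).
have hmt : m <= eps_R PL dq / dq.
  by rewrite ler_pdivlMr // mulrC.
rewrite /rand_laplace_noise_law.
have -> : [set w : R | `|q d + w - q d| <= gamma] = [set w : R | `|w| <= gamma].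
  by apply/seteqP; split => w /=; rewrite addrAC subrr add0r.
under eq_integral => lam _ do rewrite (@inner_eq R lam gamma g0).
have c1 : continuous (fun lam : R => 1 - expR (- lam * gamma)).
  have -> : (fun lam : R => 1 - expR (- lam * gamma)) = (fun lam => 1 + (-1) * expR ((- gamma) * lam)).
    by apply: funext => x; rewrite mulN1r mulNr mulrC -mulNr.
  move=> x; apply: differentiable_continuous; apply/derivable1_diffP.
  have h := @is_deriveD R R R (fun=> (1:R)) (fun lam => (-1) * expR ((- gamma) * lam)) x 1 _ _
    (is_derive_cst _ _ _) (is_derive_cexp R (-1) (- gamma) x).
  by have [] := h.
rewrite (@restrictS R PL (fun lam => 1 - expR (- lam * gamma)) c1 PS).
under eq_integral => lam _ do rewrite EFinB mulNr mulrC -mulNr.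
have iC1 : PL.-integrable S (EFin \o (fun=> (1:R))).
  exact: finite_measure_integrable_cst.
rewrite (@integralB_EFin _ _ _ PL S (fun=> 1) (fun x => expR (- gamma * x)) mS iC1 iG).
have -> : (\int[PL]_(x in S) (1:R)%:E = 1)%E.
  by rewrite integral_cst // mul1e; exact: PS.
rewrite -(fineK (integrable_fin_num mS iG)) -EFinB lee_fin.
rewrite lerD2l lerN2.
apply: le_trans J2.
rewrite ler_expR.
have -> : - eps_R PL dq * gamma / dq = - gamma * (eps_R PL dq / dq) by ring.
by rewrite !mulNr lerN2 ler_wpM2l // ltW.
Qed.
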